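(* Let $G$ be a connected graph with vertex set $\{u_1,\dots,u_n\}$, $n\ge2$, and let $\mathcal{H}=\{H_1,\dots,H_n\}$ be a family of graphs. Then $\dim_l(G\circ\mathcal{H})=\operatorname{adim}_l(G\circ\mathcal{H})$ if and only if $\varrho(G,\mathcal{H})=\varrho'(G,\mathcal{H})$.
   Context: All graphs are finite and simple with at least one vertex. $d_G$ is shortest-path distance ($+\infty$ between components), $d_{G,2}=\min\{d_G,2\}$; $s$ distinguishes $x,y$ w.r.t. $d$ if $d(s,x)\ne d(s,y)$. $\dim_l(G)$: minimum size of $S\subseteq V(G)$ such that any two adjacent vertices are distinguished w.r.t. $d_G$ by a vertex of $S$. $\operatorname{adim}_l(G)$: same with $d_{G,2}$ in place of $d_G$; minimum such sets are local adjacency bases. $\Phi$: edgeless graphs. $\mathcal{G}$: class of graphs $H$ such that every local adjacency basis $B$ of $H$ satisfies $B\subseteq N_H(v)$ for some $v$. True twins: $N[x]=N[y]$; let $U_1,\dots,U_k$ be the non-singleton true twin classes of $G$ and $T(G)=\bigcup_jU_j$. Lexicographic product $G\circ\mathcal{H}$: vertex set $\bigcup_i\{u_i\}\times V(H_i)$, $(u_i,v)\sim(u_j,w)$ iff $u_iu_j\in E(G)$, or $i=j$ and $vw\in E(H_i)$. $V_E=\{u_i\in V(G)-T(G): H_i\in\Phi\}$; $I=\{u_i: H_i\in\mathcal{G}\}$; for each $j$ with $I\cap U_j\ne\emptyset$ choose one vertex of $I\cap U_j$ and let $I'_j$ be the remaining vertices ($I'_j=\emptyset$ otherwise); $X_E=I-\bigcup_jI'_j$.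 Relation $\mathcal{R}$ (resp. $\mathcal{R}'$) on $X_E$: $u_i\sim u_j$ and $d_G(u,u_i)=d_G(u,u_j)$ (resp. $d_{G,2}(u,u_i)=d_{G,2}(u,u_j)$) for all $u\in V(G)-(V_E\cup\{u_i,u_j\})$. $\varrho(G,\mathcal{H})$ (resp. $\varrho'(G,\mathcal{H})$) is the minimum $|A|$ over $A\subseteq X_E$ such that every pair in $X_E$ satisfying $\mathcal{R}$ (resp. $\mathcal{R}'$) is distinguished by a vertex of $A$ w.r.t. $d_G$ (resp. $d_{G,2}$). *)

(* Defs.v *)
(* Graphs are symmetric irreflexive relations on finTypes. *)
From mathcomp Require Import all_boot.
Set Warnings "-notation-overridden".

Set Implicit Arguments. Unset Strict Implicit. Unset Printing Implicit Defensive.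

Section Graphs.
Variables (T : finType) (e : rel T).

Definition walk_len (x y : T) (k : nat) : bool :=
  [exists p : k.-tuple T, path e x p && (last x p == y)].

(* shortest-path distance d_G; None encodes +infinity (different components).
   The least walk length equals the shortest path length, and any reachable
   vertex is reachable by a walk of length < #|T|. *)
Definition dist (x y : T) : option nat :=
  let k := find (walk_len x y) (iota 0 #|T|) in
  if k < #|T| then Some k else None.

Definition dist2 (x y : T) : option nat :=
  match dist x y with Some k => Some (minn k 2) | None => Some 2 end.

Definition local_gen (d : T -> T -> option nat) (S : {set T}) : bool :=
  [forall x, forall y, e x y ==> [exists s in S, d s x != d s y]].

Definition local_metric_gen (S : {set T}) := local_gen dist S.
Definition local_adj_gen (S : {set T}) := local_gen dist2 S.

(* dim_l and adim_l (minimum sizes; [set: T] is always a generator) *)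
Definition dim_l : nat := \big[minn/#|T|]_(S : {set T} | local_metric_gen S) #|S|.
Definition adim_l : nat := \big[minn/#|T|]_(S : {set T} | local_adj_gen S) #|S|.

Definition local_adj_basis (B : {set T}) : bool :=
  local_adj_gen B && (#|B| == adim_l).

Definition openN (v : T) : {set T} := [set w | e v w].
Definition closedN (v : T) : {set T} := [set w | (w == v) || e v w].

Definition in_classG : bool :=
  [forall B : {set T}, local_adj_basis B ==> [exists v, B \subset openN v]].

Definition edgeless : bool := [forall x, forall y, ~~ e x y].

Definition true_twins (x y : T) : bool := closedN x == closedN y.

Definition in_twin_part (x : T) : bool := [exists y, (y != x) && true_twins x y].

End Graphs.

Section Lex.
Variables (V : finType) (e : rel V) (T : V -> finType) (eH : forall i, rel (T i)).

Definition lexV := {i : V & T i}.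

Definition lex_rel : rel lexV := fun x y =>
  e (tag x) (tag y) || ((tag x == tag y) && @eH (tag x) (tagged x) (tagged_as x y)).

Definition V_E : {set V} := [set u | ~~ in_twin_part e u && edgeless (@eH u)].

Definition I_set : {set V} := [set u | in_classG (@eH u)].

(* rep is a choice, for each true twin class U_j meeting I, of one vertex
   of I :&: U_j (rep u is the vertex chosen in the class of u). *)
Definition valid_choice (rep : V -> V) : Prop :=
  forall u, u \in I_set -> in_twin_part e u ->
    [/\ rep u \in I_set, true_twins e u (rep u) &
        forall v, v \in I_set -> true_twins e u v -> rep v = rep u].

(* X_E = I minus the union of the I'_j *)
Definition X_E (rep : V -> V) : {set V} :=
  [set u in I_set | ~~ in_twin_part e u || (rep u == u)].

Definition relR (d : V -> V -> option nat) (rep : V -> V) (x y : V) : bool :=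
  [&& x \in X_E rep, y \in X_E rep, e x y &
   [forall u, (u \notin V_E) && (u != x) && (u != y) ==> (d u x == d u y)]].

Definition rho_gen (d : V -> V -> option nat) (rep : V -> V) : nat :=
  \big[minn/#|V|]_(A : {set V} | (A \subset X_E rep) &&
      [forall x, forall y, relR d rep x y ==> [exists a in A, d a x != d a y]])
    #|A|.

Definition rho (rep : V -> V) : nat := rho_gen (dist e) rep.
Definition rho' (rep : V -> V) : nat := rho_gen (dist2 e) rep.
End Lex.

(* Main.v *)
Require Import Defs.
Set Warnings "-notation-overridden".
From mathcomp Require Import all_boot zify.

Set Implicit Arguments. Unset Strict Implicit. Unset Printing Implicit Defensive.

Section Walk.
Variables (T : finType) (e : rel T).

Lemma walk_len0 x y : walk_len e x y 0 = (x == y).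
Proof.
apply/existsP/eqP.
  by case=> p /andP[_]; rewrite (tuple0 p) /= => /eqP.
by move=> ->; exists [tuple]; rewrite /= eqxx.
Qed.

Lemma walk_lenS x y k :
  walk_len e x y k.+1 = [exists z, e x z && walk_len e z y k].
Proof.
apply/existsP/existsP.
  case=> p; case/tupleP: p => z p /=; case/andP=> /andP[exz pp] lp.
  by exists z; rewrite exz; apply/existsP; exists p; rewrite pp.
case=> z /andP[exz /existsP[p /andP[pp lp]]].
by exists [tuple of z :: p]; rewrite /= exz pp.
Qed.

Lemma walk_len1 x y : walk_len e x y 1 = e x y.
Proof.
rewrite walk_lenS; apply/existsP/idP.
  by case=> z /andP[exz]; rewrite walk_len0 => /eqP <-.
by move=> exy; exists y; rewrite exy walk_len0 eqxx.
Qed.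

Lemma walk_short x y k : walk_len e x y k -> exists2 k', k' < #|T| &
  walk_len e x y k'.
Proof.
case/existsP=> p /andP[pp /eqP lp].
case: (shortenP pp) lp => p' pp' up' _ lp'.
exists (size p').
  by have := card_uniqP up'; move=> /= <-; apply: max_card.
by apply/existsP; exists (in_tuple p'); rewrite pp' lp' eqxx.
Qed.

Lemma dist_spec x y k : walk_len e x y k ->
  (forall k', k' < k -> ~~ walk_len e x y k') -> dist e x y = Some k.
Proof.
move=> wk mk.
have [k' k'lt wk'] := walk_short wk.
have kk' : k <= k'.
  by rewrite leqNgt; apply/negP=> /mk; rewrite wk'.
have klt : k < #|T| by apply: leq_ltn_trans kk' k'lt.
rewrite /dist.
set j := find _ _.
have jk : j <= k.
  rewrite leqNgt; apply/negP=> kj.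
  have := before_find 0 kj.
  by rewrite nth_iota // add0n wk.
have jlt : j < #|T| by apply: leq_ltn_trans jk klt.
rewrite jlt.
have wj : walk_len e x y j.
  have := nth_find 0 (_ : has (walk_len e x y) (iota 0 #|T|)).
  rewrite -/j nth_iota // add0n; apply.
  by apply/hasP; exists k => //; rewrite mem_iota.
have kj : k <= j by rewrite leqNgt; apply/negP => /mk; rewrite wj.
by have -> : j = k by apply/eqP; rewrite eqn_leq jk kj.
Qed.

Lemma dist_Some x y k : dist e x y = Some k ->
  walk_len e x y k /\ (forall k', walk_len e x y k' -> k <= k').
Proof.
rewrite /dist; set j := find _ _.
case: ifP => // jlt [<-].
have hs : has (walk_len e x y) (iota 0 #|T|) by rewrite has_find size_iota.
split.
  by have := nth_find 0 hs; rewrite -/j nth_iota // add0n.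
move=> k' wk'; rewrite leqNgt; apply/negP=> k'j.
by have := before_find 0 k'j; rewrite nth_iota ?add0n ?wk' // (ltn_trans k'j).
Qed.

Definition hd (x y : T) : nat := if x == y then 0 else if e x y then 1 else 2.

Lemma dist_refl x : dist e x x = Some 0.
Proof. by apply: dist_spec; rewrite ?walk_len0. Qed.

Lemma dist_edge x y : irreflexive e -> e x y -> dist e x y = Some 1.
Proof.
move=> irr exy; apply: dist_spec; first by rewrite walk_len1.
case=> // _; rewrite walk_len0; apply/eqP=> xy; by rewrite xy irr in exy.
Qed.

Lemma dist2_hd x y : irreflexive e -> dist2 e x y = Some (hd x y).
Proof.
move=> irr; rewrite /dist2 /hd.
case: eqP => [->|nxy]; first by rewrite dist_refl.
case: ifP => [exy|nexy]; first by rewrite dist_edge.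
case E: dist => [m|] //.
have [w _] := dist_Some E.
case: m E w => [|[|m]] E w //.
  by move: w; rewrite walk_len0 => /eqP.
by move: w; rewrite walk_len1 nexy.
Qed.

End Walk.

Set Implicit Arguments. Unset Strict Implicit. Unset Printing Implicit Defensive.

Section Twins.
Variables (T : finType) (e : rel T).
Hypotheses (esym : symmetric e) (eirr : irreflexive e).

Lemma walk_len_morph (f : T -> T) : (forall a b, e (f a) (f b) = e a b) ->
  forall k x y, walk_len e x y k -> walk_len e (f x) (f y) k.
Proof.
move=> fe; elim=> [|k IH] x y.
  by rewrite !walk_len0 => /eqP ->.
rewrite !walk_lenS => /existsP[z /andP[exz wz]].
by apply/existsP; exists (f z); rewrite fe exz IH.
Qed.

Lemma dist_inv (f : T -> T) : (forall a b, e (f a) (f b) = e a b) ->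
  involutive f -> forall x y, dist e (f x) (f y) = dist e x y.
Proof.
move=> fe fK x y.
have E : walk_len e (f x) (f y) =1 walk_len e x y.
  move=> k; apply/idP/idP; last exact: walk_len_morph.
  by move/(walk_len_morph fe); rewrite !fK.
by rewrite /dist (eq_find E).
Qed.

Definition swap (u w a : T) := if a == u then w else if a == w then u else a.

Lemma twinN u w y : true_twins e u w -> ((y == u) || e u y) = ((y == w) || e w y).
Proof.
by move/eqP/setP/(_ y); rewrite !inE.
Qed.

Lemma twin_sym u w : true_twins e u w -> true_twins e w u.
Proof. by rewrite /true_twins eq_sym. Qed.

Lemma twin_trans u v w : true_twins e u v -> true_twins e v w -> true_twins e u w.
Proof. by rewrite /true_twins => /eqP -> . Qed.

Lemma twin_edge u w : true_twins e u w -> u != w -> e u w.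
Proof.
move=> tw uw; have := twinN w tw; rewrite eqxx /= eq_sym (negbTE uw) /=.
by move=> ->.
Qed.

Lemma twin_nbr u w y : true_twins e u w -> y != u -> e w y -> e u y.
Proof.
move=> tw yu ewy; have := twinN y tw; rewrite ewy orbT (negbTE yu) /=.
by [].
Qed.

Lemma swap_e u w : true_twins e u w -> forall a b, e (swap u w a) (swap u w b) = e a b.
Proof.
move=> tw a b; rewrite /swap.
have tw' := twin_sym tw.
have F : forall c, c != u -> c != w -> e u c = e w c.
  move=> c cu cw; have := twinN c tw; by rewrite (negbTE cu) (negbTE cw).
case: (eqVneq u w) => [<-|uw].
  by case: (eqVneq a u) => [->|au]; case: (eqVneq b u) => [->|bu].
case: (eqVneq a u) => [->|au]; case: (eqVneq b u) => [->|bu].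
- by rewrite !eirr.
- case: (eqVneq b w) => [->|bw]; first by rewrite esym.
  by rewrite F.
- case: (eqVneq a w) => [->|aw]; first by rewrite esym.
  by rewrite esym (esym a) F.
case: (eqVneq a w) => [->|aw]; case: (eqVneq b w) => [->|bw] //.
- by rewrite !eirr.
- by rewrite F.
- by rewrite esym (esym a) F.
Qed.

Lemma swap_inv u w : involutive (swap u w).
Proof.
move=> a; rewrite /swap.
case: (eqVneq a u) => [->|au].
  by rewrite eqxx; case: eqVneq.
case: (eqVneq a w) => [->|aw]; first by rewrite eqxx.
by rewrite (negbTE au) (negbTE aw).
Qed.

Lemma dist_twin2 u w i : true_twins e u w -> i != u -> i != w ->
  dist e i w = dist e i u.
Proof.
move=> tw iu iw.
have := dist_inv (swap_e tw) (@swap_inv u w) i u.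
by rewrite /swap eqxx (negbTE iu) (negbTE iw).
Qed.

Lemma dist_twin1 u w i : true_twins e u w -> i != u -> i != w ->
  dist e w i = dist e u i.
Proof.
move=> tw iu iw.
have := dist_inv (swap_e tw) (@swap_inv u w) u i.
by rewrite /swap eqxx (negbTE iu) (negbTE iw).
Qed.

End Twins.

Set Implicit Arguments. Unset Strict Implicit. Unset Printing Implicit Defensive.

Section BigMin.
Variables (I : finType) (P : pred I) (f : I -> nat) (n : nat).

Lemma bigmin_le i : P i -> \big[minn/n]_(j | P j) f j <= f i.
Proof.
move=> Pi; rewrite -[index_enum I]/(index_enum I).
have : i \in index_enum I by rewrite mem_index_enum.
elim: (index_enum I) => // a s IH; rewrite inE big_cons.
case/orP=> [/eqP <-|ins]; first by rewrite Pi geq_minl.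
case: (P a); last exact: IH.
by rewrite geq_min IH ?orbT.
Qed.

Lemma bigmin_geq k : (forall i, P i -> k <= f i) -> k <= n ->
  k <= \big[minn/n]_(j | P j) f j.
Proof.
move=> H kn; apply: (big_ind (fun x => k <= x)) => //.
  by move=> x y kx ky; rewrite leq_min kx ky.
Qed.

Lemma bigmin_ex i0 : P i0 -> f i0 <= n ->
  exists2 i, P i & \big[minn/n]_(j | P j) f j = f i.
Proof.
move=> Pi0 fi0.
have : (\big[minn/n]_(j | P j) f j == n) ||
       [exists i, P i && (\big[minn/n]_(j | P j) f j == f i)].
  apply: (big_ind (fun x => (x == n) || [exists i, P i && (x == f i)])).
  - by rewrite eqxx.
  - move=> x y Hx Hy /=.
    by have [->|->] : minn x y = x \/ minn x y = y by rewrite /minn; case: ltnP; auto.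
  - by move=> i Pi; apply/orP; right; apply/existsP; exists i; rewrite Pi eqxx.
case/orP=> [/eqP E|/existsP[i /andP[Pi /eqP E]]]; last by exists i.
exists i0 => //; apply/eqP; rewrite eqn_leq bigmin_le //=.
by rewrite E fi0.
Qed.
End BigMin.

Lemma dist_exists (T : finType) (e : rel T) x y k : walk_len e x y k ->
  exists m, dist e x y = Some m.
Proof.
move=> w; have ex : exists k, walk_len e x y k by exists k.
case: (ex_minnP ex) => m wm mm; exists m; apply: dist_spec => // k' k'm.
by apply/negP=> /mm; rewrite leqNgt k'm.
Qed.

Lemma connect_walk (T : finType) (e : rel T) x y : connect e x y ->
  exists k, walk_len e x y k.
Proof.
case/connectP=> p pp ->; exists (size p); apply/existsP; exists (in_tuple p).
by rewrite pp eqxx.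
Qed.

Section GDist.
Variables (V : finType) (e : rel V).
Hypotheses (esym : symmetric e) (eirr : irreflexive e)
  (econn : forall x y, connect e x y).

Definition gd i j := odflt 0 (dist e i j).

Lemma gd_dist i j : dist e i j = Some (gd i j).
Proof.
have [k w] := connect_walk (econn i j).
by have [m E] := dist_exists w; rewrite /gd E.
Qed.

Lemma gd_walk i j : walk_len e i j (gd i j).
Proof. by have [] := dist_Some (gd_dist i j). Qed.

Lemma gd_min i j k : walk_len e i j k -> gd i j <= k.
Proof. by have [_] := dist_Some (gd_dist i j); apply. Qed.

Lemma gd_lip i j l : e i j -> gd i l <= (gd j l).+1.
Proof.
move=> eij; apply: gd_min; rewrite walk_lenS; apply/existsP; exists j.
by rewrite eij gd_walk.
Qed.

Lemma gd_edge i j : e i j -> gd i j = 1.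
Proof. by move=> eij; have := gd_dist i j; rewrite dist_edge // => -[]. Qed.

Lemma gd_pos i j : i != j -> 0 < gd i j.
Proof.
move=> ij; have := gd_walk i j; case: (gd i j) => //.
by rewrite walk_len0 (negbTE ij).
Qed.

Lemma nbr_exists i : 1 < #|V| -> exists j, e i j.
Proof.
move=> V2.
have [j ji] : exists j, j != i.
  case/card_gt1P: V2 => x [y [_ _ xy]].
  by case: (eqVneq x i) => [xi|xi]; [exists y; rewrite -xi eq_sym | exists x].
have := gd_walk i j; case E: (gd i j) => [|k].
  by rewrite walk_len0 eq_sym (negbTE ji).
by rewrite walk_lenS => /existsP[z /andP[ez _]]; exists z.
Qed.
End GDist.

Set Implicit Arguments. Unset Strict Implicit. Unset Printing Implicit Defensive.

Section Prod.
Variables (V : finType) (e : rel V) (T : V -> finType) (eH : forall i, rel (T i)).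
Hypotheses (esym : symmetric e) (eirr : irreflexive e)
  (econn : forall x y, connect e x y) (V2 : 1 < #|V|)
  (Hsym : forall i, symmetric (@eH i)) (Hirr : forall i, irreflexive (@eH i))
  (Tne : forall i, 0 < #|T i|).

Local Notation P := (lex_rel e eH).
Local Notation gd := (gd e).

Lemma lex_eq i (a b : T i) : P (Tagged T a) (Tagged T b) = eH a b.
Proof. by rewrite /lex_rel /= eirr eqxx /= tagged_asE. Qed.

Lemma lex_neq k i (c : T k) (a : T i) : k != i ->
  P (Tagged T c) (Tagged T a) = e k i.
Proof. by move=> ki; rewrite /lex_rel /= (negbTE ki) orbF. Qed.

Definition fP (x y : lexV T) : nat :=
  if tag x == tag y then hd (@eH (tag x)) (tagged x) (tagged_as x y)
  else gd (tag x) (tag y).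

Lemma fP_eq i (a b : T i) : fP (Tagged T a) (Tagged T b) = hd (@eH i) a b.
Proof. by rewrite /fP /= eqxx tagged_asE. Qed.

Lemma fP_neq k i (c : T k) (a : T i) : k != i ->
  fP (Tagged T c) (Tagged T a) = gd k i.
Proof. by move=> ki; rewrite /fP /= (negbTE ki). Qed.

Lemma hd_le2 (U : finType) (r : rel U) x y : hd r x y <= 2.
Proof. by rewrite /hd; case: eqP => //; case: (r x y). Qed.

Lemma fP_lip x z y : P x z -> fP x y <= (fP z y).+1.
Proof.
case: x => i a; case: z => j c; case: y => l b.
case: (eqVneq j i) => [ji|ji].
  subst j; rewrite lex_eq => eac.
  case: (eqVneq l i) => [li|li]; last by rewrite !fP_neq // eq_sym.
  subst l; rewrite !fP_eq /hd.
  case: (eqVneq c b) => [cb|cb]; first by subst c; rewrite eac; case: (a =P b); case: (b =P b).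
  by case: (c =P b) => // _; case: (a =P b) => // _; case: (eH a b); case: (eH c b).
rewrite lex_neq 1?eq_sym // => eij.
case: (eqVneq l i) => [li|li].
  subst l; rewrite fP_eq fP_neq // gd_edge // 1?esym //.
  exact: hd_le2.
rewrite fP_neq 1?eq_sym //.
case: (eqVneq l j) => [lj|lj].
  by subst l; rewrite gd_edge.
rewrite fP_neq 1?eq_sym //; exact: gd_lip.
Qed.

Lemma walkP_ge k x y : walk_len P x y k -> fP x y <= k.
Proof.
elim: k x => [|k IH] x.
  rewrite walk_len0 => /eqP <-; case: x => i a.
  by rewrite fP_eq /hd eqxx.
rewrite walk_lenS => /existsP[z /andP[xz wz]].
apply: leq_trans (fP_lip y xz) _; rewrite ltnS; exact: IH.
Qed.

Lemma lift_walk k i l : walk_len e i l k.+1 ->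
  forall (a : T i) (b : T l), walk_len P (Tagged T a) (Tagged T b) k.+1.
Proof.
elim: k i => [|k IH] i.
  rewrite walk_len1 => eil a b; rewrite walk_len1 lex_neq //.
  by apply/negP=> /eqP il; rewrite il eirr in eil.
rewrite walk_lenS => /existsP[z /andP[eiz wz]] a b.
have /card_gt0P[c _] := Tne z.
rewrite walk_lenS; apply/existsP; exists (Tagged T c).
rewrite lex_neq ?eiz ?IH //.
by apply/negP=> /eqP iz; rewrite iz eirr in eiz.
Qed.

Lemma walkP_fP x y : walk_len P x y (fP x y).
Proof.
case: x => i a; case: y => l b.
case: (eqVneq i l) => [il|il].
  subst l; rewrite fP_eq /hd.
  case: (eqVneq a b) => [->|ab]; first by rewrite walk_len0.
  case: ifP => eab; first by rewrite walk_len1 lex_eq.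
  have [j eij] := nbr_exists econn i V2.
  have ij : i != j by apply/negP=> /eqP ij; rewrite ij eirr in eij.
  have /card_gt0P[c _] := Tne j.
  rewrite walk_lenS; apply/existsP; exists (Tagged T c); rewrite lex_neq //.
  rewrite eij walk_len1 lex_neq 1?eq_sym //; by rewrite esym.
rewrite fP_neq //.
have := gd_walk econn i l.
have := gd_pos econn il.
case: (gd i l) => // k _ w; exact: lift_walk.
Qed.

Lemma distP x y : dist P x y = Some (fP x y).
Proof.
apply: dist_spec; first exact: walkP_fP.
by move=> k' lt; apply/negP=> /walkP_ge; rewrite leqNgt lt.
Qed.

Lemma distP_eq i (a b : T i) : dist P (Tagged T a) (Tagged T b) = Some (hd (@eH i) a b).
Proof. by rewrite distP fP_eq. Qed.

Lemma dist2P_eq i (a b : T i) : dist2 P (Tagged T a) (Tagged T b) = Some (hd (@eH i) a b).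
Proof. by rewrite /dist2 distP_eq; have := hd_le2 (@eH i) a b => /minn_idPl ->. Qed.

Lemma distP_neq k i (c : T k) (a : T i) : k != i ->
  dist P (Tagged T c) (Tagged T a) = dist e k i.
Proof. by move=> ki; rewrite distP fP_neq // gd_dist. Qed.

Lemma dist2P_neq k i (c : T k) (a : T i) : k != i ->
  dist2 P (Tagged T c) (Tagged T a) = dist2 e k i.
Proof. by move=> ki; rewrite /dist2 distP_neq. Qed.

End Prod.

Set Implicit Arguments. Unset Strict Implicit. Unset Printing Implicit Defensive.

Section HGraph.
Variables (U : finType) (r : rel U).
Hypotheses (rsym : symmetric r) (rirr : irreflexive r) (Une : 0 < #|U|).

Definition genH (B : {set U}) :=
  [forall a, forall b, r a b ==> [exists s in B, hd r s a != hd r s b]].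
Definition goodH (B : {set U}) := [forall a, ~~ (B \subset openN r a)].

Lemma genH_adj (B : {set U}) : local_adj_gen r B = genH B.
Proof.
rewrite /local_adj_gen /local_gen /genH; apply: eq_forallb => a.
apply: eq_forallb => b; congr (_ ==> _); apply: eq_existsb => s.
by rewrite !dist2_hd.
Qed.

Lemma genH_setT : genH setT.
Proof.
apply/forallP=> a; apply/forallP=> b; apply/implyP=> rab.
apply/existsP; exists a; rewrite inE /hd eqxx.
by case: (a =P b) => [ab|]; [rewrite ab rirr in rab | rewrite rab].
Qed.

Lemma genH_sub (B C : {set U}) : B \subset C -> genH B -> genH C.
Proof.
move=> BC /forallP H; apply/forallP=> a; apply/forallP=> b; apply/implyP=> rab.
have /existsP[s /andP[sB ns]] := implyP (forallP (H a) b) rab.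
by apply/existsP; exists s; rewrite ns (subsetP BC).
Qed.

Lemma basis_ex : exists B, genH B /\ #|B| = adim_l r.
Proof.
have H1 : local_adj_gen r setT by rewrite genH_adj genH_setT.
have [B gB E] := @bigmin_ex _ (local_adj_gen r) (fun S : {set U} => #|S|) #|U| setT
  H1 (max_card _).
by exists B; rewrite -genH_adj; split => //; rewrite /adim_l E.
Qed.

Lemma adim_le (B : {set U}) : genH B -> adim_l r <= #|B|.
Proof. by move=> gB; apply: bigmin_le; rewrite genH_adj. Qed.

Lemma goodH_pt (B : {set U}) a : goodH B -> exists2 c, c \in B & hd r c a != 1.
Proof.
move/forallP/(_ a)/subsetPn=> [c cB]; rewrite inE => nac.
exists c => //; rewrite /hd; case: (c =P a) => // _.
by rewrite rsym (negbTE nac).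
Qed.

Lemma goodH_n0 (B : {set U}) : goodH B -> exists c, c \in B.
Proof.
have /card_gt0P[a _] := Une.
by move=> /(goodH_pt a)[c cB _]; exists c.
Qed.

Lemma genH_n0 (B : {set U}) : genH B -> ~~ edgeless r -> exists c, c \in B.
Proof.
move=> gB; rewrite /edgeless negb_forall => /existsP[a].
rewrite negb_forall => /existsP[b]; rewrite negbK => rab.
have /existsP[s /andP[sB _]] := implyP (forallP (forallP gB a) b) rab.
by exists s.
Qed.

Lemma sub_openN_hd (B : {set U}) a c : B \subset openN r a -> c \in B -> hd r c a = 1.
Proof.
move=> /subsetP BN cB; have := BN c cB; rewrite inE => rac.
rewrite /hd rsym rac; case: eqP => // ca; by rewrite ca rirr in rac.
Qed.

Lemma edgeless_classG : edgeless r -> in_classG r.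
Proof.
move=> el.
have a0 : adim_l r = 0.
  apply/eqP; rewrite -leqn0 -(cards0 U); apply: adim_le.
  apply/forallP=> a; apply/forallP=> b; by rewrite (negbTE (forallP (forallP el a) b)).
apply/forallP=> B; apply/implyP=> /andP[_]; rewrite a0 cards_eq0 => /eqP ->.
have /card_gt0P[v _] := Une.
by apply/existsP; exists v; rewrite sub0set.
Qed.

Lemma edgeless_good (B : {set U}) c : edgeless r -> c \in B -> goodH B.
Proof.
move=> el cB; apply/forallP=> a; apply/subsetPn; exists c => //.
by rewrite inE (negbTE (forallP (forallP el a) c)).
Qed.

Lemma good_ext (B : {set U}) v : genH B -> B \subset openN r v -> goodH (v |: B).
Proof.
move=> gB BN; apply/forallP=> w; apply/negP=> /subsetP H.
have : v \in openN r w by apply: H; rewrite setU11.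
rewrite inE => rwv.
have /existsP[s /andP[sB]] := implyP (forallP (forallP gB w) v) rwv.
have sw : s \in openN r w by apply: H; rewrite setU1r.
have hw : hd r s w = 1.
  by apply: (@sub_openN_hd [set s]); [rewrite sub1set | rewrite set11].
by rewrite hw (sub_openN_hd BN sB).
Qed.

Lemma basis_good_notG : ~~ in_classG r -> exists B, [/\ genH B, #|B| = adim_l r & goodH B].
Proof.
rewrite /in_classG negb_forall => /existsP[B]; rewrite negb_imply => /andP[/andP[gB /eqP cB]].
rewrite negb_exists => /forallP nB.
by exists B; split => //; rewrite -?genH_adj //; apply/forallP.
Qed.

Lemma basis_in_G (B : {set U}) : in_classG r -> genH B -> #|B| = adim_l r -> ~~ goodH B.
Proof.
move=> /forallP/(_ B) H gB cB; have /existsP[v Bv] : [exists v, B \subset openN r v].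
  by apply: (implyP H); rewrite /local_adj_basis genH_adj gB cB eqxx.
by rewrite negb_forall; apply/existsP; exists v; rewrite negbK.
Qed.

End HGraph.

Set Implicit Arguments. Unset Strict Implicit. Unset Printing Implicit Defensive.

Section Sections.
Variables (V : finType) (T : V -> finType).

Definition Sec (S : {set lexV T}) i : {set T i} := [set a | Tagged T a \in S].
Definition Build (F : forall i, {set T i}) : {set lexV T} :=
  [set x | tagged x \in F (tag x)].

Lemma Sec_Build F i : Sec (Build F) i = F i.
Proof. by apply/setP=> a; rewrite !inE. Qed.

Lemma Tagged_inj i : injective (Tagged T (i:=i)).
Proof.
move=> a b E; have := congr1 (tagged_as (Tagged T a)) E.
by rewrite !tagged_asE.
Qed.

Lemma card_Sec (S : {set lexV T}) : #|S| = \sum_i #|Sec S i|.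
Proof.
rewrite -sum1_card (partition_big (@tag _ _) xpredT) //=.
apply: eq_bigr => i _; rewrite sum1_card.
rewrite -(card_imset (Sec S i) (@Tagged_inj i)).
apply: eq_card => x; rewrite [in LHS]unfold_in /=; apply/andP/imsetP.
  case: x => j c /= [xS /eqP ji]; subst j.
  by exists c; rewrite ?inE.
by case=> a; rewrite inE => aS ->; rewrite aS eqxx.
Qed.

Lemma sum_mem (X : {set V}) : \sum_i (i \in X) = #|X|.
Proof.
rewrite -sum1_card [RHS]big_mkcond /=; apply: eq_bigr => i _.
by case: (i \in X).
Qed.

End Sections.

Set Implicit Arguments. Unset Strict Implicit. Unset Printing Implicit Defensive.

Section Abs.
Variables (V : finType) (e : rel V) (T : V -> finType) (eH : forall i, rel (T i)).

Definition act (X : {set V}) k := (k \in X) || ~~ edgeless (@eH k).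
Definition goodV (X : {set V}) i := (i \notin I_set eH) || (i \in X).
Definition Feas (d : V -> V -> option nat) (X : {set V}) :=
  (X \subset I_set eH) && [forall i, forall j, e i j ==>
    [|| goodV X i, goodV X j |
     [exists k, [&& k != i, k != j, act X k & d k i != d k j]]]].
Definition minF d := \big[minn/#|V|]_(X | Feas d X) #|X|.
Definition Wsum := \sum_i adim_l (@eH i).

Lemma Feas_I d : Feas d (I_set eH).
Proof.
rewrite /Feas subxx /=; apply/forallP=> i; apply/forallP=> j; apply/implyP=> _.
by rewrite /goodV; case: (i \in I_set eH).
Qed.

Unset Implicit Arguments.
Hypotheses (esym : symmetric e) (eirr : irreflexive e)
  (Hsym : forall i, symmetric (@eH i)) (Hirr : forall i, irreflexive (@eH i))
  (Tne : forall i, 0 < #|T i|).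

Variables (D : lexV T -> lexV T -> option nat) (d : V -> V -> option nat).
Hypotheses (HDeq : forall i (a b : T i), D (Tagged T a) (Tagged T b) = Some (hd (@eH i) a b))
  (HDneq : forall k i (c : T k) (a : T i), k != i -> D (Tagged T c) (Tagged T a) = d k i)
  (Hd1 : forall i j, e i j -> d i j = Some 1).

Set Implicit Arguments.
Local Notation P := (lex_rel e eH).

Lemma neq_of_e i j : e i j -> i != j.
Proof. by move=> eij; apply/negP=> /eqP ij; rewrite ij eirr in eij. Qed.

Lemma upper X : Feas d X -> exists S, local_gen P D S /\ #|S| <= Wsum + #|X|.
Proof.
move=> /andP[XI /forallP FX].
pose spec i (B : {set T i}) := [&& genH (@eH i) B,
  #|B| <= adim_l (@eH i) + (i \in X) & goodV X i ==> goodH (@eH i) B].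
have ex i : exists B, spec i B.
  have [B0 [gB0 cB0]] := basis_ex (Hirr i).
  case gi: (goodV X i); last by exists B0; rewrite /spec gB0 cB0 leq_addr gi.
  case iI: (i \in I_set eH); last first.
    have [|B [gB cB goB]] := basis_good_notG (Hirr i).
      by move: iI; rewrite inE => ->.
    by exists B; rewrite /spec gB cB leq_addr goB implybT.
  have iX : i \in X by move: gi; rewrite /goodV iI.
  case goB0: (goodH (@eH i) B0).
    by exists B0; rewrite /spec gB0 cB0 leq_addr goB0 implybT.
  move/negbT: goB0; rewrite /goodH negb_forall => /existsP[v]; rewrite negbK => B0v.
  exists (v |: B0); rewrite /spec (good_ext (Hsym i) (Hirr i) gB0 B0v) implybT.
  rewrite (genH_sub (subsetUr _ _) gB0) iX cardsU1 cB0 addnC leq_add2l.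
  by case: (v \notin B0).
pose F i := odflt set0 [pick B | spec i B].
have FS i : spec i (F i).
  rewrite /F; case: pickP => [B //|/= H].
  by have [B] := ex i; rewrite H.
exists (Build F); split.
  apply/forallP=> x; apply/forallP=> y; apply/implyP.
  case: x => i a; case: y => l b.
  case: (eqVneq i l) => [il|il].
    subst l; rewrite lex_eq // => eab.
    have /and3P[gF _ _] := FS i.
    have /existsP[s /andP[sF ns]] := implyP (forallP (forallP gF a) b) eab.
    by apply/existsP; exists (Tagged T s); rewrite inE /= sF /= !HDeq.
  rewrite lex_neq // => eil.
  have := implyP (forallP (FX i) l) eil.
  case/or3P=> [gi|gl|/existsP[k /and4P[ki kl ak dk]]].
  - have /and3P[_ _ /implyP/(_ gi) goF] := FS i.
    have [c cF hc] := goodH_pt (Hsym i) a goF.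
    apply/existsP; exists (Tagged T c); rewrite inE /= cF /= HDeq HDneq //.
    by rewrite Hd1.
  - have /and3P[_ _ /implyP/(_ gl) goF] := FS l.
    have [c cF hc] := goodH_pt (Hsym l) b goF.
    apply/existsP; exists (Tagged T c); rewrite inE /= cF /= HDeq HDneq 1?eq_sym //.
    by rewrite Hd1 1?esym // eq_sym.
  - have [c cF] : exists c, c \in F k.
      have /and3P[gF _ goF] := FS k.
      case/orP: ak => [kX|nel]; last exact: genH_n0 gF nel.
      by apply: (goodH_n0 (Hsym k) (Tne k)); apply: (implyP goF); rewrite /goodV kX orbT.
    by apply/existsP; exists (Tagged T c); rewrite inE /= cF /= !HDneq.
rewrite card_Sec.
under eq_bigr do rewrite Sec_Build.
rewrite /Wsum -sum_mem -big_split /=; apply: leq_sum => i _.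
by have /and3P[_ ? _] := FS i.
Qed.

Lemma lower S : local_gen P D S -> exists X, Feas d X /\ Wsum + #|X| <= #|S|.
Proof.
move=> /forallP gS.
have gF i : genH (@eH i) (Sec S i).
  apply/forallP=> a; apply/forallP=> b; apply/implyP=> eab.
  have := implyP (forallP (gS (Tagged T a)) (Tagged T b)); rewrite lex_eq // => /(_ eab).
  case/existsP=> -[k c] /andP[cS]; case: (eqVneq k i) => [ki|ki].
    subst k; rewrite !HDeq => ns.
    by apply/existsP; exists c; rewrite inE cS.
  by rewrite !HDneq // eqxx.
pose X := [set i | (i \in I_set eH) && goodH (@eH i) (Sec S i)].
exists X; split.
  apply/andP; split.
    by apply/subsetP=> i; rewrite inE => /andP[].
  apply/forallP=> i; apply/forallP=> l; apply/implyP=> eil.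
  case gi: (goodV X i) => //; case gl: (goodV X l) => //=.
  have ngi : ~~ goodH (@eH i) (Sec S i).
    by move: gi; rewrite /goodV [i \in X]inE; case: (i \in I_set eH); case: goodH.
  have ngl : ~~ goodH (@eH l) (Sec S l).
    by move: gl; rewrite /goodV [l \in X]inE; case: (l \in I_set eH); case: goodH.
  move: ngi; rewrite /goodH negb_forall => /existsP[a]; rewrite negbK => Sa.
  move: ngl; rewrite /goodH negb_forall => /existsP[b]; rewrite negbK => Sb.
  have il := neq_of_e eil.
  have := implyP (forallP (gS (Tagged T a)) (Tagged T b)); rewrite lex_neq // => /(_ eil).
  case/existsP=> -[k c] /andP[cS].
  have cSk : c \in Sec S k by rewrite inE.
  case: (eqVneq k i) => [ki|ki].
    subst k; rewrite HDeq HDneq // (sub_openN_hd (Hsym i) (Hirr i) Sa cSk).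
    by rewrite Hd1.
  case: (eqVneq k l) => [kl|kl].
    subst k; rewrite HDeq HDneq // (sub_openN_hd (Hsym l) (Hirr l) Sb cSk).
    by rewrite Hd1 // esym.
  rewrite !HDneq // => dk.
  apply/existsP; exists k; rewrite ki kl dk /= andbT /act.
  case el: (edgeless (@eH k)); last by rewrite orbT.
  rewrite orbF !inE (edgeless_classG (Hirr k) (Tne k) el) /=.
  by rewrite (edgeless_good el cSk).
rewrite card_Sec /Wsum -sum_mem -big_split /=; apply: leq_sum => i _.
have := adim_le (Hirr i) (gF i).
case iX: (i \in X) => /=; last by rewrite addn0.
move: iX; rewrite inE => /andP[iI goS] le.
rewrite addn1 ltn_neqAle le andbT; apply/negP=> /eqP E.
have := @basis_in_G _ _ (Hirr i) (Sec S i) _ (gF i) (Logic.eq_sym E).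
by move: iI; rewrite inE => iI; rewrite goS => /(_ iI).
Qed.

Lemma M1 : \big[minn/#|{: lexV T}|]_(S : {set lexV T} | local_gen P D S) #|S| = Wsum + minF d.
Proof.
have [S1 [g1 _]] := upper (Feas_I d).
have [S0 gS0 E0] := @bigmin_ex _ (local_gen P D) (fun S : {set lexV T} => #|S|)
  #|{: lexV T}| S1 g1 (max_card _).
have [Xm FXm Em] := @bigmin_ex _ (Feas d) (fun X : {set V} => #|X|) #|V|
  (I_set eH) (Feas_I d) (max_card _).
apply/eqP; rewrite eqn_leq; apply/andP; split.
  have [S [gS cS]] := upper FXm.
  by rewrite /minF Em; apply: leq_trans cS; apply: bigmin_le.
rewrite E0; have [X [FX cX]] := lower gS0.
apply: leq_trans cX; rewrite leq_add2l; exact: bigmin_le.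
Qed.

End Abs.

Unset Implicit Arguments.
Unset Strict Implicit. Unset Printing Implicit Defensive.

Section Rho.
Variables (V : finType) (e : rel V) (T : V -> finType) (eH : forall i, rel (T i))
  (rep : V -> V).
Hypotheses (esym : symmetric e) (eirr : irreflexive e)
  (Hirr : forall i, irreflexive (eH i)) (Tne : forall i, 0 < #|T i|)
  (vc : valid_choice e eH rep).
Variable (d : V -> V -> option nat).
Hypotheses (Hd0 : forall x, d x x = Some 0) (Hd1 : forall i j, e i j -> d i j = Some 1)
  (Hdt : forall u w i, true_twins e u w -> i != u -> i != w -> d i w = d i u)
  (Hdt' : forall u w i, true_twins e u w -> i != u -> i != w -> d w i = d u i).

Local Notation Iset := (I_set eH).
Local Notation XE := (X_E e eH rep).
Definition Ip := Iset :\: XE.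
Definition Arho (A : {set V}) := (A \subset XE) &&
  [forall x, forall y, relR e eH d rep x y ==> [exists a in A, d a x != d a y]].

Lemma XE_I u : u \in XE -> u \in Iset.
Proof. by rewrite inE => /andP[]. Qed.

Lemma neq_e i j : e i j -> i != j.
Proof. by move=> eij; apply/negP=> /eqP ij; rewrite ij eirr in eij. Qed.

Lemma twin_part u w : true_twins e u w -> u != w -> in_twin_part e u.
Proof. by move=> tw uw; apply/existsP; exists w; rewrite eq_sym uw tw. Qed.

Lemma Ip_prop u : u \in Ip -> [/\ u \in Iset, in_twin_part e u & rep u != u].
Proof.
rewrite in_setD => /andP[nX uI]; move: nX.
by rewrite inE uI /= negb_or negbK => /andP[tu ru].
Qed.

Lemma rep_XE u : u \in Iset -> in_twin_part e u -> rep u \in XE.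
Proof.
move=> uI tu; have [rI tw H] := vc _ uI tu.
by rewrite inE rI /= (H _ rI tw) eqxx orbT.
Qed.

Lemma rep_twin u : u \in Ip -> in_twin_part e (rep u).
Proof.
case/Ip_prop=> uI tu ru; have [_ tw _] := vc _ uI tu.
exact: (twin_part _ _ (twin_sym tw) ru).
Qed.

Lemma VE_XE k : k \in V_E e eH -> k \in XE.
Proof.
rewrite !inE => /andP[nt el]; rewrite nt andbT.
by apply: edgeless_classG.
Qed.

Lemma relR_sym x y : relR e eH d rep x y -> relR e eH d rep y x.
Proof.
case/and4P=> xX yX exy /forallP H; rewrite /relR xX yX esym exy /=.
apply/forallP=> u; apply/implyP=> C; rewrite eq_sym; apply: (implyP (H u)).
by move: C; rewrite -!andbA => /and3P[-> -> ->].
Qed.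

Lemma upperR A : Arho A -> Feas e eH d (Ip :|: A).
Proof.
case/andP=> AX /forallP HA.
have XI : Ip :|: A \subset Iset.
  apply/subsetP=> u; rewrite inE => /orP[|/(subsetP AX)/XE_I] //.
  by case/Ip_prop.
rewrite /Feas XI /=; apply/forallP=> i; apply/forallP=> j; apply/implyP=> eij.
rewrite /goodV.
case iI: (i \in Iset) => //=; case iX: (i \in Ip :|: A) => //=.
case jI: (j \in Iset) => //=; case jX: (j \in Ip :|: A) => //=.
have iXE : i \in XE by apply/negPn/negP => nX; move: iX; rewrite in_setU in_setD nX iI.
have jXE : j \in XE by apply/negPn/negP => nX; move: jX; rewrite in_setU in_setD nX jI.
have iA : i \notin A by move/negbT: iX; rewrite in_setU => /norP[].
have jA : j \notin A by move/negbT: jX; rewrite in_setU => /norP[].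
case R: (relR e eH d rep i j).
  have /existsP[a /andP[aA da]] := implyP (forallP (HA i) j) R.
  apply/existsP; exists a; rewrite da /act inE aA orbT /= andbT.
  by apply/andP; split; apply/negP=> /eqP E; [move: iA | move: jA]; rewrite -E aA.
move: R; rewrite /relR iXE jXE eij /= => /negbT; rewrite negb_forall => /existsP[u].
rewrite negb_imply -!andbA => /and4P[uVE ui uj du].
case elu: (edgeless (eH u)).
  have tu : in_twin_part e u.
    by move: uVE; rewrite inE elu andbT negbK.
  case/existsP: tu => w /andP[wu tw].
  have uw : u != w by rewrite eq_sym.
  have wi : w != i.
    apply/negP=> /eqP E; subst w.
    have eui := twin_edge tw uw.
    have ju : j != u by rewrite eq_sym.
    have euj := twin_nbr tw ju eij.
    by move: du; rewrite Hd1 // Hd1.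
  have wj : w != j.
    apply/negP=> /eqP E; subst w.
    have euj := twin_edge tw uw.
    have iu : i != u by rewrite eq_sym.
    have eji : e j i by rewrite esym.
    have eui := twin_nbr tw iu eji.
    by move: du; rewrite Hd1 // Hd1.
  have iu : i != u by rewrite eq_sym.
  have ju : j != u by rewrite eq_sym.
  have iw : i != w by rewrite eq_sym.
  have jw : j != w by rewrite eq_sym.
  have dw : d w i != d w j by rewrite (Hdt' u w i tw iu iw) (Hdt' u w j tw ju jw).
  case elw: (edgeless (eH w)); last first.
    by apply/existsP; exists w; rewrite wi wj /act elw orbT.
  have uI : u \in Iset by rewrite inE; apply: edgeless_classG.
  have wI : w \in Iset by rewrite inE; apply: edgeless_classG.
  have : (u \in Ip) || (w \in Ip).
    rewrite !in_setD uI wI !andbT -negb_and; apply/negP=> /andP[uX wX].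
    have tu : in_twin_part e u := twin_part u w tw uw.
    have tw' : in_twin_part e w := twin_part w u (twin_sym tw) wu.
    move: uX wX; rewrite !inE tu tw' /= => /andP[_ /eqP ru] /andP[_ /eqP rw].
    have [_ _ H] := vc _ uI tu.
    by move: (H w wI tw); rewrite ru rw => E; rewrite E eqxx in uw.
  case/orP=> [uIp|wIp].
    by apply/existsP; exists u; rewrite ui uj /act inE uIp du.
  by apply/existsP; exists w; rewrite wi wj /act inE wIp dw.
apply/existsP; exists u; rewrite ui uj /act elu orbT /=.
exact: du.
Qed.
Lemma lowerR X : Feas e eH d X -> exists A, Arho A /\ #|Ip| + #|A| <= #|X|.
Proof.
case/andP=> XI /forallP FX.
have Fe i j : e i j -> [|| goodV eH X i, goodV eH X j |
    [exists k, [&& k != i, k != j, act eH X k & d k i != d k j]]].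
  by move=> h; apply: (implyP (forallP (FX i) j) h).
have ngood u : u \in Iset -> u \notin X -> goodV eH X u = false.
  by rewrite /goodV => -> /negbTE ->.
have F_twin u v : u \in Iset -> v \in Iset -> u \notin X -> v \notin X ->
    true_twins e u v -> u = v.
  move=> uI vI uX vX tw; apply/eqP; apply/negPn/negP => uv.
  have := Fe u v (twin_edge tw uv); rewrite !ngood //=.
  by case/existsP=> k /and4P[ku kv _]; rewrite (Hdt u v k tw ku kv) eqxx.
pose Rm := rep @: (Ip :\: X).
have Rm_X r : r \in Rm -> r \in X :&: XE /\ in_twin_part e r.
  case/imsetP => u /setDP[uIp uX] ->.
  have [uI tu ru] := Ip_prop _ uIp; have [rI tw _] := vc _ uI tu.
  split; last exact: rep_twin.
  rewrite in_setI rep_XE // andbT; apply/negPn/negP => rX.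
  by have E := F_twin u (rep u) uI rI uX rX tw; rewrite -E eqxx in ru.
have Rm_inj : {in Ip :\: X &, injective rep}.
  move=> u v /setDP[uIp uX] /setDP[vIp vX] E.
  have [uI tu _] := Ip_prop _ uIp; have [vI tv _] := Ip_prop _ vIp.
  have [_ twu _] := vc _ uI tu; have [_ twv _] := vc _ vI tv.
  rewrite -E in twv.
  exact: F_twin uI vI uX vX (twin_trans twu (twin_sym twv)).
pose A := (X :&: XE) :\: Rm.
have H3 x y k : relR e eH d rep x y -> k != x -> k != y -> act eH X k ->
    d k x != d k y -> k \in A.
  move=> /and4P[_ _ _ /forallP H] kx ky ak dk.
  have kVE : k \in V_E e eH.
    apply/negPn/negP => nk; have := implyP (H k); rewrite nk kx ky => /(_ isT) /eqP E.
    by rewrite E eqxx in dk.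
  move: (kVE); rewrite inE => /andP[nt el].
  have kX : k \in X by move: ak; rewrite /act el orbF.
  rewrite in_setD in_setI kX VE_XE //= andbT.
  by apply/negP => /Rm_X [_ tk]; rewrite tk in nt.
have Hx x y : relR e eH d rep x y -> x \in X -> exists2 a, a \in A & d a x != d a y.
  move=> R xX; have R' := R; case/and4P: R' => xXE yXE exy _.
  have xy := neq_e _ _ exy.
  case xRm: (x \in Rm); last first.
    by exists x; rewrite ?Hd0 ?Hd1 // in_setD in_setI xRm xX xXE.
  case/imsetP: xRm => u /setDP[uIp uX] xu.
  have [uI tu ru] := Ip_prop _ uIp; have [_ tw _] := vc _ uI tu.
  rewrite -xu in tw ru.
  have yu : y != u.
    by apply/negP=> /eqP E; move: uIp; rewrite in_setD -E yXE.
  have xu' : x != u := ru.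
  have euy : e u y := twin_nbr tw yu exy.
  have exu : e x u := twin_edge (twin_sym tw) ru.
  have nu : goodV eH X u = false := ngood u uI uX.
  have := Fe u y euy; rewrite nu /=.
  case/orP => [gy | /existsP[k /and4P[ku ky ak dk]]]; last first.
    case: (eqVneq k x) => [kx|kx].
      by subst k; rewrite (Hd1 _ _ exu) (Hd1 _ _ exy) eqxx in dk.
    have dk' : d k x != d k y by rewrite (Hdt u x k tw ku kx).
    by exists k => //; apply: (H3 x y k R kx ky ak dk').
  have yX : y \in X by move: gy; rewrite /goodV (XE_I _ yXE).
  case yRm: (y \in Rm); last first.
    by exists y; rewrite ?Hd0 ?Hd1 1?esym // in_setD in_setI yRm yX yXE.
  case/imsetP: yRm => u' /setDP[u'Ip u'X] yu'.
  have [u'I tu' ru'] := Ip_prop _ u'Ip; have [_ tw' _] := vc _ u'I tu'.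
  rewrite -yu' in tw' ru'.
  have uu' : u != u'.
    apply/negP => /eqP E; subst u'.
    have E : x = y by rewrite xu yu'.
    by rewrite E eirr in exy.
  have eyu : e y u by rewrite esym.
  have eu'u : e u' u := twin_nbr tw' uu' eyu.
  have nu' := ngood u' u'I u'X.
  have xu'' : x != u'.
    by apply/negP=> /eqP E; move: u'Ip; rewrite in_setD -E xXE.
  have yx : y != x by rewrite eq_sym.
  have euu' : e u u' by rewrite esym.
  have := Fe u u' euu'; rewrite nu nu' /=.
  case/existsP => k /and4P[ku ku' ak dk].
  case: (eqVneq k x) => [kx|kx].
    subst k; move: dk.
    by rewrite (Hd1 _ _ exu) -(Hdt u' y x tw' xu'' xy) Hd1 ?eqxx.
  case: (eqVneq k y) => [ky|ky].
    subst k; move: dk.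
    by rewrite (Hd1 _ _ (twin_edge (twin_sym tw') ru')) -(Hdt u x y tw yu yx) Hd1 ?eqxx // esym.
  have dk' : d k x != d k y by rewrite (Hdt u x k tw ku kx) (Hdt u' y k tw' ku' ky).
  by exists k => //; apply: (H3 x y k R kx ky ak dk').
exists A; split.
  apply/andP; split.
    by apply/subsetP=> a; rewrite in_setD in_setI => /and3P[].
  apply/forallP=> x; apply/forallP=> y; apply/implyP=> R.
  have R' := R; case/and4P: R' => xXE yXE exy _.
  have := Fe x y exy; case/or3P => [gx|gy|/existsP[k /and4P[kx ky ak dk]]].
  - have xX : x \in X by move: gx; rewrite /goodV (XE_I _ xXE).
    by have [a aA da] := Hx x y R xX; apply/existsP; exists a; rewrite aA da.
  - have yX : y \in X by move: gy; rewrite /goodV (XE_I _ yXE).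
    have [a aA da] := Hx y x (relR_sym _ _ R) yX.
    by apply/existsP; exists a; rewrite aA eq_sym da.
  - by apply/existsP; exists k; rewrite (H3 x y k) ?dk.
have RmS : Rm \subset X :&: XE by apply/subsetP => r /Rm_X[].
have c1 : #|Rm| = #|Ip :\: X| := card_in_imset Rm_inj.
have c2 : #|A| = #|X :&: XE| - #|Rm| by rewrite cardsD (setIidPr RmS).
have c3 : #|Ip :&: X| + #|Ip :\: X| = #|Ip| := cardsID X Ip.
have c4 : #|X :&: XE| + #|X :\: XE| = #|X| := cardsID XE X.
have c5 : X :\: XE = Ip :&: X.
  apply/setP=> x; rewrite !in_setD in_setI in_setD.
  by case xX: (x \in X); rewrite ?andbF // (subsetP XI x xX) !andbT.
have c6 : #|Rm| <= #|X :&: XE| := subset_leq_card RmS.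
rewrite c5 in c4; lia.
Qed.

End Rho.

Section M2.
Variables (V : finType) (e : rel V) (T : V -> finType) (eH : forall i, rel (T i))
  (rep : V -> V).
Hypotheses (esym : symmetric e) (eirr : irreflexive e)
  (Hirr : forall i, irreflexive (eH i)) (Tne : forall i, 0 < #|T i|)
  (vc : valid_choice e eH rep).
Variable (d : V -> V -> option nat).
Hypotheses (Hd0 : forall x, d x x = Some 0) (Hd1 : forall i j, e i j -> d i j = Some 1)
  (Hdt : forall u w i, true_twins e u w -> i != u -> i != w -> d i w = d i u)
  (Hdt' : forall u w i, true_twins e u w -> i != u -> i != w -> d w i = d u i).

Lemma M2 : minF e eH d = #|Ip V e T eH rep| + rho_gen e eH d rep.
Proof.
have AXE : Arho V e T eH rep d (X_E e eH rep).
  rewrite /Arho subxx /=; apply/forallP=> x; apply/forallP=> y; apply/implyP.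
  case/and4P=> xX _ exy _; apply/existsP; exists x; rewrite xX Hd0 Hd1 //.
have [A0 HA0 EA] := @bigmin_ex _ (Arho V e T eH rep d) (fun A : {set V} => #|A|) #|V|
  (X_E e eH rep) AXE (max_card _).
have EA' : rho_gen e eH d rep = #|A0| by rewrite -EA.
have [Xm FXm Em] := @bigmin_ex _ (Feas e eH d) (fun X : {set V} => #|X|) #|V|
  (I_set eH) (Feas_I e eH d) (max_card _).
apply/eqP; rewrite eqn_leq; apply/andP; split.
  rewrite EA'.
  apply: leq_trans (@bigmin_le _ _ (fun X : {set V} => #|X|) #|V| _
     (upperR V e T eH rep esym Hirr Tne vc d Hd1 Hdt' A0 HA0)) _.
  by rewrite cardsU leq_subr.
rewrite /minF Em.
have [A [HA cA]] := lowerR V e T eH rep esym eirr Hirr Tne vc d Hd0 Hd1 Hdt Xm FXm.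
apply: leq_trans cA; rewrite leq_add2l /rho_gen.
exact: (@bigmin_le _ _ (fun A : {set V} => #|A|) #|V| _ HA).
Qed.
End M2.

Unset Implicit Arguments.

Theorem theorem8 (V : finType) (e : rel V) (T : V -> finType)
  (eH : forall i, rel (T i)) (rep : V -> V) :
  symmetric e -> irreflexive e ->
  (forall x y, connect e x y) ->
  1 < #|V| ->
  (forall i, symmetric (eH i)) -> (forall i, irreflexive (eH i)) ->
  (forall i, 0 < #|T i|) ->
  valid_choice e eH rep ->
  (dim_l (lex_rel e eH) = adim_l (lex_rel e eH) <->
   rho e eH rep = rho' e eH rep).
Proof.
move=> esym eirr econn V2 Hsym Hirr Tne vc.
have Hd1 : forall i j, e i j -> dist e i j = Some 1.
  by move=> i j eij; apply: dist_edge.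
have Hd1' : forall i j, e i j -> dist2 e i j = Some 1.
  by move=> i j eij; rewrite /dist2 (dist_edge eirr eij).
have E1 : dim_l (lex_rel e eH) = Wsum eH + minF e eH (dist e).
  exact: (M1 esym eirr Hsym Hirr Tne (distP_eq eH esym eirr econn V2 Tne)
    (distP_neq eH esym eirr econn V2 Tne) Hd1).
have E2 : adim_l (lex_rel e eH) = Wsum eH + minF e eH (dist2 e).
  exact: (M1 esym eirr Hsym Hirr Tne (dist2P_eq eH esym eirr econn V2 Tne)
    (dist2P_neq eH esym eirr econn V2 Tne) Hd1').
have R1 := M2 V e T eH rep esym eirr Hirr Tne vc (dist e) (dist_refl e) Hd1
  (dist_twin2 esym eirr) (dist_twin1 esym eirr).
have R2 : minF e eH (dist2 e) = #|Ip V e T eH rep| + rho_gen e eH (dist2 e) rep.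
  apply: (M2 V e T eH rep esym eirr Hirr Tne vc (dist2 e)) => //.
  - by move=> x; rewrite /dist2 dist_refl.
  - by move=> u w i tw iu iw; rewrite /dist2 (dist_twin2 esym eirr tw iu iw).
  - by move=> u w i tw iu iw; rewrite /dist2 (dist_twin1 esym eirr tw iu iw).
rewrite /rho /rho' E1 E2 R1 R2; split.
  by move/addnI/addnI.
by move=> ->.
Qed.
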